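(* Let $0<q<1$, let $k$ be a nonnegative integer, $n$ a positive integer, and $x\in[0,1]$. Then $$\left(\frac{n-k}{n}\right)B_{k,n}(x,q)+\left(\frac{k+1}{n}\right)B_{k+1,n}(x,q)=B_{k,n-1}(x,q)+(1-q)[x]_q[1-x]_q\,B_{k,n-1}(x,q).$$
   Context: Let $q$ be a real number with $0<q<1$. For real $x$, the $q$-number is $[x]_q=\frac{1-q^x}{1-q}$. For a nonnegative integer $k$ and $x\in[0,1]$, the modified $q$-Bernstein polynomials $B_{k,n}(x,q)$, $n=0,1,2,\dots$, are defined by the generating function $$\frac{t^k e^{[1-x]_q t}[x]_q^k}{k!}=\sum_{n=0}^\infty B_{k,n}(x,q)\frac{t^n}{n!}.$$ *)

(* Defs.v *)
From Stdlib Require Import Reals.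
From Coquelicot Require Import Coquelicot.
Open Scope R_scope.

Definition qnum (q x : R) : R := (1 - Rpower q x) / (1 - q).

Definition qB_gen (k : nat) (x q : R) (t : R) : R :=
  t ^ k * exp (qnum q (1 - x) * t) * (qnum q x) ^ k / INR (Factorial.fact k).

(* B_{k,n}(x,q) is the coefficient of t^n/n! in the expansion of the
   (entire) generating function, i.e. its n-th derivative at t = 0. *)
Definition qBernstein (k n : nat) (x q : R) : R :=
  Derive_n (qB_gen k x q) n 0.

(* Main.v *)
Require Import Defs.
From Stdlib Require Import Reals.
From Coquelicot Require Import Coquelicot.
From Stdlib Require Import Lra Lia.
Open Scope R_scope.

Definition ff (a : R) (k : nat) (t : R) : R := t ^ k * exp (a * t).

Lemma ff_deriv a k t : is_derive (ff a k) t (INR k * ff a (pred k) t + a * ff a k t).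
Proof.
  unfold ff. auto_derive; auto. ring.
Qed.

Lemma Derive_ff a k : forall t, Derive (ff a k) t = INR k * ff a (pred k) t + a * ff a k t.
Proof. intro t. apply is_derive_unique, ff_deriv. Qed.

Lemma Dn_S f m x : Derive_n f (S m) x = Derive_n (Derive f) m x.
Proof.
  replace (S m) with (m + 1)%nat by lia. rewrite <- (Derive_n_comp f m 1 x). reflexivity.
Qed.

Lemma exn_S f m : (forall x, ex_derive f x) -> (forall x, ex_derive_n (Derive f) m x) ->
  forall x, ex_derive_n f (S m) x.
Proof.
  intros H1 H2 x. destruct m as [|m].
  - simpl. apply H1.
  - specialize (H2 x). simpl in H2 |- *.
    eapply ex_derive_ext; [|exact H2].
    intro t. simpl. rewrite <- Dn_S. reflexivity.
Qed.

Lemma ff_smooth a : forall m j k x, (j <= m)%nat -> ex_derive_n (ff a k) j x.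
Proof.
  induction m as [|m IH]; intros j k x Hj.
  - replace j with 0%nat by lia. simpl. exact I.
  - destruct (Nat.eq_dec j (S m)) as [->|Hne]; [|apply IH; lia].
    apply exn_S.
    + intro y. eexists. apply ff_deriv.
    + intro y. apply (ex_derive_n_ext (fun t => INR k * ff a (pred k) t + a * ff a k t)).
      { intro t. symmetry. apply Derive_ff. }
      apply ex_derive_n_plus; exists (mkposreal 1 Rlt_0_1); intros z _ i Hi;
      apply ex_derive_n_scal_l; apply IH; lia.
Qed.

Lemma Dn_ff_S a k m : Derive_n (ff a k) (S m) 0 =
  INR k * Derive_n (ff a (pred k)) m 0 + a * Derive_n (ff a k) m 0.
Proof.
  rewrite Dn_S. rewrite (Derive_n_ext _ _ _ _ (Derive_ff a k)).
  rewrite Derive_n_plus.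
  - rewrite !Derive_n_scal_l. reflexivity.
  - exists (mkposreal 1 Rlt_0_1); intros z _ i Hi; apply ex_derive_n_scal_l; eapply ff_smooth; exact Hi.
  - exists (mkposreal 1 Rlt_0_1); intros z _ i Hi; apply ex_derive_n_scal_l; eapply ff_smooth; exact Hi.
Qed.

Definition EE a k m := if Compare_dec.le_dec k m then Binomial.C m k * a ^ (m - k) else 0.

Lemma Dn_ff a : forall m k, Derive_n (ff a k) m 0 = INR (Factorial.fact k) * EE a k m.
Proof.
  induction m as [|m IH]; intro k.
  - simpl. unfold ff, EE. destruct k.
    + simpl. rewrite Rmult_0_r, exp_0. unfold Binomial.C. simpl. field.
    + destruct (Compare_dec.le_dec (S k) 0); [lia|]. simpl. ring.
  - rewrite Dn_ff_S, !IH. unfold EE.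
    destruct k as [|k].
    + simpl pred. destruct (Compare_dec.le_dec 0 m); [|lia].
      destruct (Compare_dec.le_dec 0 (S m)); [|lia].
      unfold Binomial.C. rewrite !Nat.sub_0_r. simpl (Factorial.fact 0).
      change (Factorial.fact (S m)) with (S m * Factorial.fact m)%nat.
      rewrite mult_INR. simpl pow. change (INR 0) with 0.
      assert (0 < INR (Factorial.fact m)) by (apply lt_0_INR, Factorial.lt_O_fact).
      assert (0 < INR (S m)) by (apply lt_0_INR; lia). field. repeat split; try lra; simpl; lra.
    + change (Init.Nat.pred (S k)) with k.
      change (Factorial.fact (S k)) with (S k * Factorial.fact k)%nat.
      rewrite mult_INR.
      destruct (Compare_dec.le_dec k m); destruct (Compare_dec.le_dec (S k) m);
      destruct (Compare_dec.le_dec (S k) (S m)); try lia.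
      * rewrite <- (Binomial.pascal m k) by lia. replace (m - k)%nat with (S (m - S k)) by lia.
        replace (S m - S k)%nat with (S (m - S k)) by lia. simpl pow. ring.
      * assert (k = m) by lia. subst. rewrite !Nat.sub_diag.
        unfold Binomial.C. rewrite !Nat.sub_diag. simpl pow. field.
        repeat split; apply not_0_INR; apply Factorial.fact_neq_0.
      * ring.
Qed.

Lemma qB_val k n x q : qBernstein k n x q = qnum q x ^ k * EE (qnum q (1 - x)) k n.
Proof.
  unfold qBernstein.
  rewrite (Derive_n_ext _ (fun t => ff (qnum q (1 - x)) k t * (qnum q x ^ k / INR (Factorial.fact k)))).
  2:{ intro t. unfold qB_gen, ff. unfold Rdiv. ring. }
  rewrite Derive_n_scal_r, Dn_ff. field. apply not_0_INR, Factorial.fact_neq_0.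
Qed.

Theorem theorem4 (q : R) (k n : nat) (x : R) :
  0 < q < 1 -> (0 < n)%nat -> 0 <= x <= 1 ->
  ((INR n - INR k) / INR n) * qBernstein k n x q
  + ((INR k + 1) / INR n) * qBernstein (S k) n x q
  = qBernstein k (n - 1) x q
    + (1 - q) * qnum q x * qnum q (1 - x) * qBernstein k (n - 1) x q.
Proof.
  intros Hq Hn Hx. rewrite !qB_val.
  set (a := qnum q (1 - x)). set (b := qnum q x).
  assert (Hab : a + b = 1 + (1 - q) * b * a).
  { unfold a, b, qnum.
    assert (E : Rpower q x * Rpower q (1 - x) = q).
    { rewrite <- Rpower_plus. replace (x + (1 - x)) with 1 by ring. apply Rpower_1; lra. }
    set (P := Rpower q x) in *. set (Q := Rpower q (1 - x)) in *.
    transitivity ((2 - P - Q) / (1 - q)). { field. lra. }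
    transitivity ((1 - q + (1 - P) * (1 - Q)) / (1 - q)).
    { f_equal. rewrite <- E. ring. }
    field. lra. }
  destruct n as [|n]; [lia|]. replace (S n - 1)%nat with n by lia.
  assert (HnR : INR (S n) <> 0) by (apply not_0_INR; lia).
  unfold EE.
  destruct (Compare_dec.le_dec k (S n)); destruct (Compare_dec.le_dec (S k) (S n));
  destruct (Compare_dec.le_dec k n); try lia.
  -
    unfold Binomial.C.
    replace (S n - k)%nat with (S (n - k)) by lia.
    replace (S n - S k)%nat with (n - k)%nat by lia.
    change (Factorial.fact (S n)) with (S n * Factorial.fact n)%nat.
    change (Factorial.fact (S k)) with (S k * Factorial.fact k)%nat.
    change (Factorial.fact (S (n - k))) with (S (n - k) * Factorial.fact (n - k))%nat.
    rewrite !mult_INR. simpl pow.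
    replace (INR (S (n - k))) with (INR (S n) - INR k) by (rewrite !S_INR, minus_INR by lia; ring).
    rewrite S_INR.
    assert (0 < INR (Factorial.fact n)) by (apply lt_0_INR, Factorial.lt_O_fact).
    assert (0 < INR (Factorial.fact k)) by (apply lt_0_INR, Factorial.lt_O_fact).
    assert (0 < INR (Factorial.fact (n - k))) by (apply lt_0_INR, Factorial.lt_O_fact).
    assert (INR (S n) - INR k <> 0).
    { rewrite S_INR. assert (INR k <= INR n) by (apply le_INR; lia). lra. }
    pose proof (pos_INR k).
    transitivity (INR (Factorial.fact n) / (INR (Factorial.fact k) * INR (Factorial.fact (n - k)))
      * b ^ k * a ^ (n - k) * (a + b)).
    + rewrite (S_INR k). rewrite S_INR in H2.
      assert (INR k <= INR n) by (apply le_INR; lia).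
      field. repeat split; lra.
    + rewrite Hab. ring.
  -
    assert (k = S n) by lia. subst k.
    rewrite Rminus_diag. unfold Rdiv. rewrite Rmult_0_l. ring.
  - ring.
Qed.
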